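(* Let $O$ be a Hermitian operator on $n$ qubits and, for each parameter vector $\boldsymbol{\theta}$, let $\rho(\boldsymbol{\theta})$ be the noise-free output state with cost $C(\boldsymbol{\theta})=\mathrm{Tr}[\rho(\boldsymbol{\theta})O]$. Suppose the circuit contains $L$ instances of global depolarizing noise with error probability $s$, so that the noisy cost is $\widetilde{C}(\boldsymbol{\theta},s)=\mathrm{Tr}[((1-s)^L\rho(\boldsymbol{\theta})+(1-(1-s)^L)\mathbb{I}/2^n)O]$. Fix a base error probability $p\in[0,1)$ and a boost factor $a_1>1$ with $a_1p\le1$, and consider a Zero Noise Extrapolation estimator with two noise levels of the form $$C_m(\boldsymbol{\theta})=\frac{A\,\widetilde{C}(\boldsymbol{\theta},p)-B\,\widetilde{C}(\boldsymbol{\theta},a_1p)}{D}+E,$$ with real constants $A,B,D,E$ independent of $\boldsymbol{\theta}$, $D\neq0$, whose ratio $c=A/B$ is: $c=a_1$ for Richardson extrapolation; $c=a_1 r(\varepsilon)^{t(\varepsilon)}/r(a_1\varepsilon)^{t(a_1\varepsilon)}$ for exponential extrapolation (with $r,t$ the positive functions of the noise level appearing in the exponential noise model and $\varepsilon$ the base noise level); and $c=a_1^{-(L+1)}$ for NIBP extrapolation. Assume $C_m$ is estimated from independent estimates of $\widetilde{C}(\boldsymbol{\theta},p)$ and $\widetilde{C}(\boldsymbol{\theta},a_1p)$, so that $\mathrm{Var}[C_m(\boldsymbol{\theta})]=(A^2\mathrm{Var}[\widetilde{C}(\boldsymbol{\theta},p)]+B^2\mathrm{Var}[\widetilde{C}(\boldsymbol{\theta},a_1p)])/D^2$,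 and that $\mathrm{Var}[\widetilde{C}(\boldsymbol{\theta},a_1p)]\ge\mathrm{Var}[\widetilde{C}(\boldsymbol{\theta},p)]$ for all $\boldsymbol{\theta}$. For two parameter vectors $\boldsymbol{\theta}_1,\boldsymbol{\theta}_2$ with $C(\boldsymbol{\theta}_1)\ne C(\boldsymbol{\theta}_2)$, let $\chi_{depol}$ be the relative resolvability of these two points. Then $$\chi_{depol}\le\frac{\Big(c-\frac{(1-a_1p)^L}{(1-p)^L}\Big)^2}{c^2+1},$$ and consequently $\chi_{depol}\le1$ for each of the three extrapolation strategies.
   Context: The error mitigation cost is $\gamma=\mathrm{Var}[C_m(\boldsymbol{\theta})]/\mathrm{Var}[\widetilde{C}(\boldsymbol{\theta},p)]$ (evaluated at either point). The relative resolvability of two points is $\chi=\frac{1}{\gamma}\Big(\frac{\Delta C_m}{\Delta\widetilde{C}}\Big)^2$, where $\Delta C_m=C_m(\boldsymbol{\theta}_1)-C_m(\boldsymbol{\theta}_2)$ and $\Delta\widetilde{C}=\widetilde{C}(\boldsymbol{\theta}_1,p)-\widetilde{C}(\boldsymbol{\theta}_2,p)$; it is the ratio of the number of shots needed to resolve the two points to fixed precision without and with mitigation. *)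

(* Defs.v *)
From HB Require Import structures.
From mathcomp Require Import all_boot all_order all_algebra.
From mathcomp Require Import complex.
From mathcomp Require Import reals exp.

Unset Printing Implicit Defensive.
Import Order.TTheory GRing.Theory Num.Theory.
Local Open Scope ring_scope.

Definition toC {R : rcfType} (x : R) : R[i] := x%:C%C.

Definition adjmx {R : rcfType} {m k : nat} (M : 'M[R[i]]_(m, k)) : 'M[R[i]]_(k, m) :=
  (map_mx (@conjc R) M)^T.

Definition hermitian_mx {R : rcfType} {m : nat} (M : 'M[R[i]]_m) : Prop :=
  M = adjmx M.

(* Positive semidefinite: <v, M v> is real and nonnegative for all v. *)
Definition psd {R : rcfType} {m : nat} (M : 'M[R[i]]_m) : Prop :=
  forall v : 'cV[R[i]]_m, 0 <= (adjmx v *m M *m v) 0 0.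

Definition density_matrix {R : rcfType} {m : nat} (M : 'M[R[i]]_m) : Prop :=
  [/\ hermitian_mx M, psd M & \tr M = 1].

Definition cost {R : rcfType} {m : nat} (rho O : 'M[R[i]]_m) : R[i] :=
  \tr (rho *m O).

Definition depol_state {R : rcfType} (n L : nat) (s : R) (rho : 'M[R[i]]_(2 ^ n))
  : 'M[R[i]]_(2 ^ n) :=
  (toC ((1 - s) ^+ L)) *: rho + (toC ((1 - (1 - s) ^+ L) / (2 ^ n)%:R)) *: 1%:M.

Definition noisy_cost {R : rcfType} (n L : nat) (s : R) (rho O : 'M[R[i]]_(2 ^ n)) : R[i] :=
  cost (depol_state n L s rho) O.

Definition zne_estimator {R : rcfType} (A B D E : R) (Cp Ca : R[i]) : R[i] :=
  ((toC A) * Cp - (toC B) * Ca) / (toC D) + (toC E).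

Definition var_mitigated {R : rcfType} (A B D Vp Va : R) : R :=
  (A ^+ 2 * Vp + B ^+ 2 * Va) / D ^+ 2.

(* Error mitigation cost gamma = Var[C_m] / Var[C~(.,p)]. *)
Definition mitigation_cost {R : rcfType} (Vm Vp : R) : R := Vm / Vp.

(* Relative resolvability chi = (1/gamma) (Delta C_m / Delta C~)^2. *)
Definition resolvability {R : rcfType} (gamma : R) (dCm dCt : R[i]) : R[i] :=
  (toC (gamma^-1)) * (dCm / dCt) ^+ 2.

(* Main.v *)
Require Import Defs.
From HB Require Import structures.
From mathcomp Require Import all_boot all_order all_algebra.
From mathcomp Require Import reals exp.
From mathcomp Require Import complex.
From mathcomp Require Import ring lra.
Import Order.TTheory GRing.Theory Num.Theory.
Local Open Scope ring_scope.

Lemma Ct_eq (R : realType) n L (s : R) (rho O : 'M[R[i]]_(2 ^ n)) :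
  noisy_cost n L s rho O =
  toC ((1 - s) ^+ L) * cost rho O + toC ((1 - (1 - s) ^+ L) / (2 ^ n)%:R) * \tr O.
Proof.
by rewrite /noisy_cost /cost /depol_state mulmxDl -!scalemxAl mul1mx mxtraceD !mxtraceZ.
Qed.

Lemma alg (F : fieldType) (a b d e u v w1 w2 x1 x2 t : F) :
  x1 - x2 != 0 -> u != 0 -> d != 0 ->
  ((a * (u * x1 + w1 * t) - b * (v * x1 + w2 * t)) / d + e -
   ((a * (u * x2 + w1 * t) - b * (v * x2 + w2 * t)) / d + e)) /
  (u * x1 + w1 * t - (u * x2 + w1 * t)) = (a * u - b * v) / (d * u).
Proof.
move=> h1 h2 h3.
have h4 : u * x1 + w1 * t - (u * x2 + w1 * t) = u * (x1 - x2) by ring.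
rewrite h4; field; rewrite h1 h2 h3 //.
Qed.

Lemma real_bound (R : realType) (A B D Vp Va kp ka : R) :
  B != 0 -> D != 0 -> 0 < kp -> 0 <= Vp -> Vp <= Va ->
  (mitigation_cost (var_mitigated A B D Vp Va) Vp)^-1 * ((A * kp - B * ka) / (D * kp)) ^+ 2
  <= (A / B - ka / kp) ^+ 2 / ((A / B) ^+ 2 + 1).
Proof.
move=> B0 D0 kp0 Vp0 VpVa.
have E1 : ((A * kp - B * ka) / (D * kp)) ^+ 2 = (A / B - ka / kp) ^+ 2 * (B ^+ 2 / D ^+ 2).
  by field; rewrite D0 B0 gt_eqF.
have E2 : (A / B - ka / kp) ^+ 2 / ((A / B) ^+ 2 + 1) =
          (A / B - ka / kp) ^+ 2 * (B ^+ 2 / (A ^+ 2 + B ^+ 2)).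
  have hAB : A ^+ 2 + B ^+ 2 != 0.
    by rewrite gt_eqF // ltr_wpDl ?sqr_ge0 // exprn_even_gt0 //.
  have hc : (A / B) ^+ 2 + 1 != 0.
    by rewrite gt_eqF // ltr_wpDl ?sqr_ge0 //.
  by field; rewrite hAB B0 gt_eqF.
rewrite E1 E2 mulrCA; apply: ler_wpM2l; first exact: sqr_ge0.
rewrite /mitigation_cost /var_mitigated.
have [->|Vpn0] := eqVneq Vp 0.
  rewrite invr0 mulr0 invr0 mul0r; apply: divr_ge0; first exact: sqr_ge0.
  by apply: addr_ge0; apply: sqr_ge0.
have Vpp : 0 < Vp by rewrite lt_def Vpn0.
have B2 : 0 < B ^+ 2 by rewrite exprn_even_gt0.
have A2 : 0 <= A ^+ 2 := sqr_ge0 A.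
have D2 : 0 < D ^+ 2 by rewrite exprn_even_gt0.
have S : 0 < A ^+ 2 * Vp + B ^+ 2 * Va.
  have h1 := mulr_ge0 A2 Vp0.
  have h2 : 0 < B ^+ 2 * Va by apply: mulr_gt0 => //; apply: (lt_le_trans Vpp).
  lra.
have -> : ((A ^+ 2 * Vp + B ^+ 2 * Va) / D ^+ 2 / Vp)^-1 * (B ^+ 2 / D ^+ 2)
   = B ^+ 2 * Vp / (A ^+ 2 * Vp + B ^+ 2 * Va).
  by field; rewrite gt_eqF // D0 Vpn0.
rewrite ler_pdivrMr // [_ / _ * _]mulrAC ler_pdivlMr; last by rewrite ltr_wpDl.
rewrite -mulrA; apply: ler_wpM2l; first exact: ltW.
have : B ^+ 2 * Vp <= B ^+ 2 * Va by apply: ler_wpM2l => //; apply: ltW.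
lra.
Qed.

Theorem proposition1 (R : realType) (n L : nat) (Theta : Type)
  (rho : Theta -> 'M[R[i]]_(2 ^ n)) (O : 'M[R[i]]_(2 ^ n))
  (Var : Theta -> R -> R) (p a1 A B D E : R) (th1 th2 th0 : Theta) :
  hermitian_mx O ->
  (forall th, density_matrix (rho th)) ->
  0 <= p -> p < 1 -> 1 < a1 -> a1 * p <= 1 ->
  D != 0 -> B != 0 ->
  (forall th s, 0 <= Var th s) ->
  (forall th, Var th p <= Var th (a1 * p)) ->
  cost (rho th1) O != cost (rho th2) O ->
  (th0 = th1 \/ th0 = th2) ->
  let Ct s th := noisy_cost n L s (rho th) O in
  let Cm th := zne_estimator A B D E (Ct p th) (Ct (a1 * p) th) in
  let gamma := mitigation_cost (var_mitigated A B D (Var th0 p) (Var th0 (a1 * p)))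
                               (Var th0 p) in
  let chi := resolvability gamma (Cm th1 - Cm th2) (Ct p th1 - Ct p th2) in
  let c := A / B in
  let q := (1 - a1 * p) ^+ L / (1 - p) ^+ L in
  chi <= toC ((c - q) ^+ 2 / (c ^+ 2 + 1)) /\
  (c = a1 -> chi <= 1) /\
  (forall (r t : R -> R) (eps : R),
     0 < r eps -> 0 < r (a1 * eps) -> 0 < t eps -> 0 < t (a1 * eps) ->
     c = a1 * r eps `^ t eps / r (a1 * eps) `^ t (a1 * eps) -> chi <= 1) /\
  (c = a1 ^- L.+1 -> chi <= 1).
Proof.
move=> _ _ p0 p1 a11 a1p D0 B0 V0 Vle dC _ Ct Cm gamma chi c q.
set kp := (1 - p) ^+ L; set ka := (1 - a1 * p) ^+ L.
have kpp : 0 < kp by rewrite exprn_gt0 // subr_gt0.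
have ka0 : 0 <= ka by rewrite exprn_ge0 // subr_ge0.
have kakp : ka <= kp.
  rewrite /ka /kp; apply: lerXn2r; rewrite ?nnegrE ?subr_ge0 //; last nra.
  by apply: ltW.
have hd : cost (rho th1) O - cost (rho th2) O != 0 by rewrite subr_eq0.
have hkp : toC kp != 0 by rewrite /toC; apply/eqP => /complexI; apply/eqP; rewrite gt_eqF.
have hD : toC D != 0 by rewrite /toC; apply/eqP => /complexI; apply/eqP.
have R1 : (Cm th1 - Cm th2) / (Ct p th1 - Ct p th2) =
   (toC A * toC kp - toC B * toC ka) / (toC D * toC kp).
  rewrite /Cm /zne_estimator /Ct !Ct_eq -/kp -/ka.
  exact: alg.
have R2 : toC ((A * kp - B * ka) / (D * kp)) =
   (toC A * toC kp - toC B * toC ka) / (toC D * toC kp).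
  clearbody kp ka; rewrite /toC !(rmorphM, rmorphB, fmorphV) //.
have chiE : chi = toC (gamma^-1 * ((A * kp - B * ka) / (D * kp)) ^+ 2).
  by rewrite /chi /resolvability R1 -R2 /toC -rmorphXn -rmorphM.
have main : chi <= toC ((c - q) ^+ 2 / (c ^+ 2 + 1)).
  rewrite chiE /toC lecR; apply: real_bound => //.
have tail : 0 <= c -> chi <= 1.
  move=> c0; apply: (le_trans main); have -> : (1 : R[i]) = toC 1 by rewrite /toC rmorph1.
  rewrite /toC lecR.
  have q0 : 0 <= q by rewrite divr_ge0 // ltW.
  have q1 : q <= 1 by rewrite ler_pdivrMr // mul1r.
  rewrite ler_pdivrMr; last by rewrite ltr_wpDl ?sqr_ge0.
  nra.
split; first exact: main.
split; first by move=> hc; apply: tail; rewrite hc; lra.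
split.
  move=> r t eps _ _ _ _ hc; apply: tail; rewrite hc.
  by rewrite divr_ge0 ?powR_ge0 // mulr_ge0 ?powR_ge0 //; lra.
move=> hc; apply: tail; rewrite hc invr_ge0 exprn_ge0 //; lra.
Qed.
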